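(* Let $(X,d)$ be a complete separable metric space without isolated points and let $f\colon X\to X$ be a continuous map. Then the following assertions are equivalent: (1) there exists a dense, uniformly Li-Yorke scrambled set in $X$; (2) $f$ is densely uniformly Li-Yorke chaotic; (3) there exists a dense, $\sigma$-Cantor, uniformly Li-Yorke scrambled set in $X$; (4) for every $k\geq 2$, both $\mathrm{Prox}_k(f)$ and $D_k(f)$ are dense in $X^k$.
   Context: A subset $S\subset X$ with at least two points is uniformly Li-Yorke scrambled for $f$ if there exist two sequences $\{p_n\}$, $\{q_n\}$ in $\mathbb{N}$ such that for all $x,y\in S$ with $x\neq y$: $\lim_{n\to\infty} d(f^{p_n}(x),f^{p_n}(y))=0$ and $\lim_{n\to\infty} d(f^{q_n}(x),f^{q_n}(y))=\infty$. The map $f$ is densely uniformly Li-Yorke chaotic if there exists a dense, uncountable, uniformly Li-Yorke scrambled subset of $X$. A Cantor set is a set homeomorphic to the Cantor ternary set; a $\sigma$-Cantor set is a countable union of Cantor sets. For $k\geq 2$, $\mathrm{Prox}_k(f)=\{(x_1,\dots,x_k)\in X^k: \liminf_{n\to\infty}\max_{1\leq i<j\leq k} d(f^n(x_i),f^n(x_j))=0\}$ and $D_k(f)=\{(x_1,\dots,x_k)\in X^k: \limsup_{n\to\infty}\min_{1\leq i<j\leq k} d(f^n(x_i),f^n(x_j))=\infty\}$. *)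

(* Defs.v *)
From Stdlib Require Import Reals List.
From Coquelicot Require Import Coquelicot.
Open Scope R_scope.

Section MetricDefs.
Variable X : Type.
Variable d : X -> X -> R.

Record is_metric : Prop := {
  met_nonneg : forall x y, 0 <= d x y;
  met_zero   : forall x y, d x y = 0 <-> x = y;
  met_sym    : forall x y, d x y = d y x;
  met_triang : forall x y z, d x z <= d x y + d y z
}.

Definition cauchy_seq (u : nat -> X) : Prop :=
  forall eps, 0 < eps -> exists N, forall m n, (N <= m)%nat -> (N <= n)%nat ->
    d (u m) (u n) < eps.

Definition converges_to (u : nat -> X) (l : X) : Prop :=
  forall eps, 0 < eps -> exists N, forall n, (N <= n)%nat -> d (u n) l < eps.

Definition complete_metric : Prop :=
  forall u, cauchy_seq u -> exists l, converges_to u l.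

Definition dense (S : X -> Prop) : Prop :=
  forall x eps, 0 < eps -> exists y, S y /\ d x y < eps.

Definition countable (S : X -> Prop) : Prop :=
  exists g : nat -> X, forall x, S x -> exists n, g n = x.

Definition separable : Prop :=
  exists D : X -> Prop, countable D /\ dense D.

Definition no_isolated_points : Prop :=
  forall x eps, 0 < eps -> exists y, y <> x /\ d x y < eps.

Definition continuous_map (f : X -> X) : Prop :=
  forall x eps, 0 < eps -> exists delta, 0 < delta /\
    forall y, d x y < delta -> d (f x) (f y) < eps.

Definition cantor_ternary (t : R) : Prop :=
  exists a : nat -> bool,
    infinite_sum (fun n => (if a n then 2 else 0) / 3 ^ (S n)) t.

(* C is a Cantor set: C is homeomorphic (with the subspace topologies) to the
   Cantor ternary set, via h restricted to cantor_ternary. *)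
Definition cantor_set (C : X -> Prop) : Prop :=
  exists h : R -> X,
    (forall t, cantor_ternary t -> C (h t)) /\
    (forall x, C x -> exists t, cantor_ternary t /\ h t = x) /\
    (forall s t, cantor_ternary s -> cantor_ternary t -> h s = h t -> s = t) /\
    (forall t eps, cantor_ternary t -> 0 < eps -> exists delta, 0 < delta /\
       forall s, cantor_ternary s -> Rabs (s - t) < delta -> d (h s) (h t) < eps) /\
    (* the inverse of h is continuous on C *)
    (forall t eps, cantor_ternary t -> 0 < eps -> exists delta, 0 < delta /\
       forall s, cantor_ternary s -> d (h s) (h t) < delta -> Rabs (s - t) < eps).

Definition sigma_cantor (S : X -> Prop) : Prop :=
  exists C : nat -> (X -> Prop), (forall n, cantor_set (C n)) /\
    forall x, S x <-> exists n, C n x.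

Definition uniformly_LY_scrambled (f : X -> X) (S : X -> Prop) : Prop :=
  (exists x y, S x /\ S y /\ x <> y) /\
  exists p q : nat -> nat,
    forall x y, S x -> S y -> x <> y ->
      is_lim_seq (fun n => d (Nat.iter (p n) f x) (Nat.iter (p n) f y)) 0 /\
      is_lim_seq (fun n => d (Nat.iter (q n) f x) (Nat.iter (q n) f y)) p_infty.

Definition densely_uniformly_LY_chaotic (f : X -> X) : Prop :=
  exists S, dense S /\ ~ countable S /\ uniformly_LY_scrambled f S.

(* points of X^k are represented as g : nat -> X, only coordinates i < k matter *)
Definition pairs (k : nat) : list (nat * nat) :=
  flat_map (fun j => map (fun i => (i, j)) (seq 0 j)) (seq 0 k).

Fixpoint Rmin_list (l : list R) : R :=
  match l with
  | nil => 0
  | a :: nil => a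
  | a :: l' => Rmin a (Rmin_list l')
  end.

Definition max_pair_dist (k : nat) (g : nat -> X) : R :=
  fold_right Rmax 0 (map (fun p => d (g (fst p)) (g (snd p))) (pairs k)).

(* min_{0 <= i < j < k} d (g i) (g j)  (used only for k >= 2) *)
Definition min_pair_dist (k : nat) (g : nat -> X) : R :=
  Rmin_list (map (fun p => d (g (fst p)) (g (snd p))) (pairs k)).

Definition Prox (f : X -> X) (k : nat) (g : nat -> X) : Prop :=
  LimInf_seq (fun n => max_pair_dist k (fun i => Nat.iter n f (g i))) = Finite 0.

Definition Dk (f : X -> X) (k : nat) (g : nat -> X) : Prop :=
  LimSup_seq (fun n => min_pair_dist k (fun i => Nat.iter n f (g i))) = p_infty.

(* P is dense in X^k (product topology, i.e. the max metric) *)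
Definition dense_k (k : nat) (P : (nat -> X) -> Prop) : Prop :=
  forall (g : nat -> X) eps, 0 < eps ->
    exists h, P h /\ forall i, (i < k)%nat -> d (g i) (h i) < eps.

End MetricDefs.

Arguments is_metric {X}.
Arguments complete_metric {X}.
Arguments separable {X}.
Arguments no_isolated_points {X}.
Arguments continuous_map {X}.
Arguments dense {X}.
Arguments countable {X}.
Arguments cantor_set {X}.
Arguments sigma_cantor {X}.
Arguments uniformly_LY_scrambled {X}.
Arguments densely_uniformly_LY_chaotic {X}.
Arguments Prox {X}.
Arguments Dk {X}.
Arguments dense_k {X}.

(* Main.v *)
Require Import Defs.
From Stdlib Require Import Reals List.
From Coquelicot Require Import Coquelicot.
From Stdlib Require Import Lia Lra Classical ClassicalEpsilon FunctionalExtensionality.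
Open Scope R_scope.

Lemma fold_max_ge (l : list R) r : In r l -> r <= fold_right Rmax 0 l.
Proof.
  induction l as [|a l IH]; simpl; [tauto|].
  intros [->|H]; [apply Rmax_l|]. eapply Rle_trans; [apply IH; exact H| apply Rmax_r].
Qed.

Lemma fold_max_lt (l : list R) e : 0 < e -> (forall r, In r l -> r < e) -> fold_right Rmax 0 l < e.
Proof.
  intros He; induction l as [|a l IH]; simpl; intros H; [lra|].
  apply Rmax_lub_lt; [apply H; auto| apply IH; intros; apply H; auto].
Qed.

Lemma fold_max_ge0 (l : list R) : 0 <= fold_right Rmax 0 l.
Proof. induction l; simpl; [lra|]. eapply Rle_trans; [exact IHl|apply Rmax_r]. Qed.

Lemma Rmin_list_le (l : list R) r : In r l -> Rmin_list l <= r.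
Proof.
  induction l as [|a l IH]; simpl; [tauto|].
  destruct l as [|b l'].
  - intros [->|[]]; lra.
  - intros [->|H]; [apply Rmin_l|]. eapply Rle_trans; [apply Rmin_r| apply IH; exact H].
Qed.

Lemma Rmin_list_gt (l : list R) M : l <> nil -> (forall r, In r l -> M < r) -> M < Rmin_list l.
Proof.
  induction l as [|a l IH]; [tauto|]. intros _ H.
  destruct l as [|b l'].
  - simpl. apply H; simpl; auto.
  - change (M < Rmin a (Rmin_list (b :: l'))). apply Rmin_glb_lt; [apply H; simpl; auto|].
    apply IH; [discriminate| intros; apply H; simpl; auto].
Qed.

Lemma in_pairs k i j : In (i, j) (pairs k) <-> (i < j < k)%nat.
Proof.
  unfold pairs. rewrite in_flat_map. split.
  - intros [x [Hx Hy]]. apply in_seq in Hx. apply in_map_iff in Hy.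
    destruct Hy as [y [Hy Hy']]. inversion Hy; subst. apply in_seq in Hy'. lia.
  - intros H. exists j. split; [apply in_seq; lia|]. apply in_map_iff. exists i.
    split; [reflexivity| apply in_seq; lia].
Qed.

Lemma finite_pos (P : nat -> R -> Prop) :
  (forall i e e', 0 < e' <= e -> P i e -> P i e') -> forall N,
  (forall i, (i < N)%nat -> exists e, 0 < e /\ P i e) -> exists e, 0 < e /\ forall i, (i < N)%nat -> P i e.
Proof.
  intros Hmon N; induction N as [|N IH]; intros H.
  - exists 1; split; [lra| intros; lia].
  - destruct IH as [e1 [He1 H1]]; [intros; apply H; lia|].
    destruct (H N) as [e2 [He2 H2]]; [lia|].
    exists (Rmin e1 e2); split; [apply Rmin_pos; auto|].
    intros i Hi. destruct (Nat.eq_dec i N) as [->|Hn].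
    + eapply Hmon; [|exact H2]. split; [apply Rmin_pos; auto| apply Rmin_r].
    + eapply Hmon; [|apply H1; lia]. split; [apply Rmin_pos; auto| apply Rmin_l].
Qed.

Lemma eventually_all (P : nat -> nat -> Prop) :
  (forall i n m, (n <= m)%nat -> P i n -> P i m) -> forall N,
  (forall i, (i < N)%nat -> exists n, P i n) -> exists n, forall i, (i < N)%nat -> P i n.
Proof.
  intros Hmon N; induction N as [|N IH]; intros H.
  - exists O; intros; lia.
  - destruct IH as [n1 H1]; [intros; apply H; lia|].
    destruct (H N) as [n2 H2]; [lia|].
    exists (max n1 n2). intros i Hi. destruct (Nat.eq_dec i N) as [->|Hn].
    + eapply Hmon; [|exact H2]; lia.
    + eapply Hmon; [|apply H1; lia]; lia.
Qed.

Section Basic.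
Variable X : Type.
Variable d : X -> X -> R.
Hypothesis Hm : is_metric d.

Lemma dpos x y : 0 <= d x y. Proof. apply (met_nonneg _ _ Hm). Qed.
Lemma dsym x y : d x y = d y x. Proof. apply (met_sym _ _ Hm). Qed.
Lemma dtri x y z : d x z <= d x y + d y z. Proof. apply (met_triang _ _ Hm). Qed.
Lemma dxx x : d x x = 0. Proof. apply (met_zero _ _ Hm); reflexivity. Qed.
Lemma d0 x y : d x y = 0 -> x = y. Proof. apply (met_zero _ _ Hm). Qed.
Lemma dneq x y : x <> y -> 0 < d x y.
Proof. intros H. destruct (dpos x y) as [h|h]; auto. exfalso; apply H, d0; auto. Qed.

Lemma max_pair_ge k g i j : (i < j < k)%nat -> d (g i) (g j) <= max_pair_dist X d k g.
Proof.
  intros H. unfold max_pair_dist. apply fold_max_ge. apply in_map_iff.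
  exists (i, j). split; [reflexivity| apply in_pairs; auto].
Qed.

Lemma max_pair_lt k g e : 0 < e -> (forall i j, (i < j < k)%nat -> d (g i) (g j) < e) ->
  max_pair_dist X d k g < e.
Proof.
  intros He H. unfold max_pair_dist. apply fold_max_lt; auto.
  intros r Hr. apply in_map_iff in Hr. destruct Hr as [[i j] [<- Hp]].
  apply in_pairs in Hp. simpl. apply H; auto.
Qed.

Lemma max_pair_ge0 k g : 0 <= max_pair_dist X d k g.
Proof. apply fold_max_ge0. Qed.

Lemma min_pair_le k g i j : (i < j < k)%nat -> min_pair_dist X d k g <= d (g i) (g j).
Proof.
  intros H. unfold min_pair_dist. apply Rmin_list_le. apply in_map_iff.
  exists (i, j). split; [reflexivity| apply in_pairs; auto].
Qed.

Lemma min_pair_gt k g M : (2 <= k)%nat -> (forall i j, (i < j < k)%nat -> M < d (g i) (g j)) ->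
  M < min_pair_dist X d k g.
Proof.
  intros Hk H. unfold min_pair_dist. apply Rmin_list_gt.
  - intros E. assert (Hin : In (0%nat, 1%nat) (pairs k)) by (apply in_pairs; lia).
    apply (in_map (fun p => d (g (fst p)) (g (snd p)))) in Hin. rewrite E in Hin. destruct Hin.
  - intros r Hr. apply in_map_iff in Hr. destruct Hr as [[i j] [<- Hp]].
    apply in_pairs in Hp. simpl. apply H; auto.
Qed.

Variable f : X -> X.
Hypothesis Hf : continuous_map d f.

Lemma iter_S n x : Nat.iter (S n) f x = f (Nat.iter n f x).
Proof. reflexivity. Qed.

Lemma iter_cont n : continuous_map d (Nat.iter n f).
Proof.
  induction n as [|n IH]; intros x eps He.
  - exists eps; split; auto.
  - destruct (Hf (Nat.iter n f x) eps He) as [d1 [Hd1 H1]].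
    destruct (IH x d1 Hd1) as [d2 [Hd2 H2]].
    exists d2; split; auto. intros y Hy. simpl. apply H1, H2, Hy.
Qed.

Lemma iter_add n m x : Nat.iter (n + m) f x = Nat.iter n f (Nat.iter m f x).
Proof. induction n; simpl; congruence. Qed.

End Basic.

Definition tc (a : nat -> bool) (n : nat) : R := (if a n then 2 else 0) / 3 ^ (S n).

Lemma tc_eq a n : tc a n = (if a n then 2 * (/3) ^ (S n) else 0).
Proof. unfold tc. rewrite pow_inv. destruct (a n); field; apply pow_nonzero; lra. Qed.

Fixpoint psum (a : nat -> bool) (n : nat) : R :=
  match n with O => 0 | S n => psum a n + tc a n end.

Lemma sum_psum a N : sum_f_R0 (tc a) N = psum a (S N).
Proof. induction N; simpl; [lra| rewrite IHN; reflexivity]. Qed.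

Lemma pow3_pos n : 0 < (/3) ^ n.
Proof. apply pow_lt; lra. Qed.

Lemma psum_bound a n m : (n <= m)%nat -> 0 <= psum a m - psum a n <= (/3) ^ n - (/3) ^ m.
Proof.
  intros H; induction H as [|m H IH]; [lra|].
  simpl psum. rewrite tc_eq. simpl pow.
  pose proof (pow3_pos m). destruct (a m); lra.
Qed.

Lemma tern_bounds a t : infinite_sum (tc a) t -> forall n, psum a n <= t <= psum a n + (/3) ^ n.
Proof.
  intros Ht n. 
  assert (Hc : forall eps, eps > 0 -> psum a n - eps <= t <= psum a n + (/3)^n + eps).
  { intros eps He. destruct (Ht eps He) as [N HN].
    specialize (HN (max N n) (Nat.le_max_l _ _)). rewrite sum_psum in HN.
    unfold Rdist in HN. apply Rabs_def2 in HN.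
    pose proof (psum_bound a n (S (max N n)) ltac:(lia)).
    pose proof (pow3_pos (S (max N n))). lra. }
  split.
  - apply Rnot_lt_le; intros Hl. destruct (Hc ((psum a n - t)/2)) as [H1 _]; lra.
  - apply Rnot_lt_le; intros Hl. destruct (Hc ((t - psum a n - (/3)^n)/2)) as [_ H1]; lra.
Qed.

Lemma psum_agree a b n : (forall i, (i < n)%nat -> a i = b i) -> psum a n = psum b n.
Proof.
  induction n; intros H; simpl; [reflexivity|]. rewrite IHn by (intros; apply H; lia).
  unfold tc. rewrite H by lia. reflexivity.
Qed.

Lemma tern_close a b s t n : infinite_sum (tc a) s -> infinite_sum (tc b) t ->
  (forall i, (i < n)%nat -> a i = b i) -> Rabs (s - t) <= (/3) ^ n.
Proof.
  intros Hs Ht H. pose proof (tern_bounds a s Hs n). pose proof (tern_bounds b t Ht n).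
  rewrite (psum_agree a b n H) in *. apply Rabs_le; lra.
Qed.

Lemma tern_far a b s t n : infinite_sum (tc a) s -> infinite_sum (tc b) t ->
  (forall i, (i < n)%nat -> a i = b i) -> a n <> b n -> (/3) ^ (S n) <= Rabs (s - t).
Proof.
  intros Hs Ht H Hn. pose proof (tern_bounds a s Hs (S n)). pose proof (tern_bounds b t Ht (S n)).
  simpl psum in *. rewrite (psum_agree a b n H) in *. rewrite !tc_eq in *.
  pose proof (pow3_pos (S n)).
  destruct (a n), (b n); try congruence.
  - rewrite Rabs_right; lra.
  - rewrite Rabs_left1; lra.
Qed.

Lemma pow_decr x m n : 0 <= x <= 1 -> (m <= n)%nat -> x ^ n <= x ^ m.
Proof.
  intros Hx H; induction H as [|n H IH]; [lra|]. simpl.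
  assert (0 <= x ^ n) by (apply pow_le; lra). nra.
Qed.

Lemma tern_agree a b s t n : infinite_sum (tc a) s -> infinite_sum (tc b) t ->
  Rabs (s - t) < (/3) ^ n -> forall i, (i < n)%nat -> a i = b i.
Proof.
  intros Hs Ht Hl. intro i. induction i as [i IH] using (well_founded_induction Wf_nat.lt_wf).
  intros Hi. destruct (Bool.bool_dec (a i) (b i)) as [E|E]; auto. exfalso.
  pose proof (tern_far a b s t i Hs Ht (fun j Hj => IH j Hj ltac:(lia)) E).
  assert ((/3) ^ n <= (/3) ^ S i).
  { apply pow_decr; [lra|lia]. }
  lra.
Qed.

Lemma tern_same a b t : infinite_sum (tc a) t -> infinite_sum (tc b) t -> forall i, a i = b i.
Proof.
  intros Ha Hb i. apply (tern_agree a b t t (S i) Ha Hb); [|lia].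
  rewrite Rminus_diag, Rabs_R0. apply pow3_pos.
Qed.

Lemma tern_exists a : exists t, infinite_sum (tc a) t.
Proof.
  assert (E : ex_series (tc a)).
  { apply (@ex_series_le R_AbsRing R_CompleteNormedModule _ (fun n => (/3) ^ n * 2)).
    - intros n. rewrite tc_eq. change norm with Rabs. simpl pow. pose proof (pow3_pos n).
      destruct (a n); [rewrite Rabs_right|rewrite Rabs_R0]; lra.
    - apply (ex_series_scal_r 2 (fun n => (/3)^n)). apply ex_series_geom. rewrite Rabs_right; lra. }
  destruct E as [t Ht]. exists t. apply is_series_Reals; auto.
Qed.

Lemma tern_zero : cantor_ternary 0.
Proof.
  exists (fun _ => false). intros eps He. exists O. intros n _.
  change (Rdist (sum_f_R0 (tc (fun _ => false)) n) 0 < eps).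
  rewrite sum_psum. assert (psum (fun _ => false) (S n) = 0).
  { induction (S n); simpl; [|rewrite IHn0]; unfold tc; [|field; apply pow_nonzero]; lra. }
  rewrite H. unfold Rdist. rewrite Rminus_diag, Rabs_R0. lra.
Qed.

Lemma pow_small x e : 0 <= x < 1 -> 0 < e -> exists n, x ^ n < e.
Proof.
  intros Hx He. destruct (pow_lt_1_zero x ltac:(rewrite Rabs_right; lra) e He) as [N HN].
  exists N. specialize (HN N (le_n _)). rewrite Rabs_right in HN; auto.
  apply Rle_ge, pow_le; lra.
Qed.

Definition bits (t : R) : nat -> bool :=
  epsilon (inhabits (fun _ : nat => false)) (fun a => infinite_sum (tc a) t).

Lemma bits_spec t : cantor_ternary t -> infinite_sum (tc (bits t)) t.
Proof. intros H. unfold bits. apply epsilon_spec. exact H. Qed.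

Lemma bits_of a t : infinite_sum (tc a) t -> bits t = a.
Proof.
  intros H. apply functional_extensionality. intro i.
  apply (tern_same (bits t) a t); auto. apply bits_spec. exists a; exact H.
Qed.

Lemma cantor_from_map (X : Type) (d : X -> X -> R) (Hm : is_metric d)
  (phi : (nat -> bool) -> X) (r dl : nat -> R) :
  (forall e, 0 < e -> exists n, r n < e) ->
  (forall a b n, (forall i, (i < n)%nat -> a i = b i) -> d (phi a) (phi b) <= r n) ->
  (forall n, 0 < dl n) ->
  (forall a b n, (forall i, (i < n)%nat -> a i = b i) -> a n <> b n -> dl n <= d (phi a) (phi b)) ->
  cantor_set d (fun x => exists a, x = phi a).
Proof.
  intros Hr Hi Hdl Hii.
  exists (fun t => phi (bits t)). split; [|split; [|split; [|split]]].
  - intros t _. eauto.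
  - intros x [a ->]. destruct (tern_exists a) as [t Ht]. exists t. split.
    + exists a; exact Ht.
    + rewrite (bits_of a t Ht). reflexivity.
  - intros s t Hs Ht E. apply NNPP. intros Hne.
    assert (exists i, bits s i <> bits t i) as [i Hi'].
    { apply NNPP; intros N. apply Hne.
      apply (uniqueness_sum (tc (bits s))); [apply bits_spec; auto|].
      replace (bits s) with (bits t); [apply bits_spec; auto|].
      apply functional_extensionality; intro i. apply NNPP; intro Q; apply N; exists i; auto. }
    assert (Hfirst : exists n, (forall j, (j < n)%nat -> bits s j = bits t j) /\ bits s n <> bits t n).
    { clear -Hi'. revert Hi'. induction i as [i IH] using (well_founded_induction Wf_nat.lt_wf).
      intros Hi'. destruct (classic (exists j, (j < i)%nat /\ bits s j <> bits t j)) as [[j [Hj Hj']]|N].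
      - apply (IH j Hj Hj').
      - exists i; split; auto. intros j Hj. apply NNPP; intro Q; apply N; eauto. }
    destruct Hfirst as [n [H1 H2]]. pose proof (Hii _ _ n H1 H2). pose proof (Hdl n).
    rewrite E, (dxx X d Hm) in H. lra.
  - intros t eps Ht He. destruct (Hr eps He) as [n Hn].
    exists ((/3) ^ n). split; [apply pow3_pos|]. intros s Hs Hst.
    eapply Rle_lt_trans; [|exact Hn]. apply Hi.
    apply (tern_agree _ _ s t n); auto; apply bits_spec; auto.
  - intros t eps Ht He.
    destruct (pow_small (/3) eps ltac:(lra) He) as [n Hn].
    destruct (finite_pos (fun i e => e <= dl i) ltac:(intros; lra) n) as [e [He' HE]].
    { intros i _. exists (dl i); split; [apply Hdl| lra]. }
    exists e. split; auto. intros s Hs Hd.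
    assert (Hag : forall i, (i < n)%nat -> bits s i = bits t i).
    { intro i. induction i as [i IH] using (well_founded_induction Wf_nat.lt_wf).
      intros Hi'. apply NNPP; intro Q.
      pose proof (Hii _ _ i (fun j Hj => IH j Hj ltac:(lia)) Q). pose proof (HE i Hi'). lra. }
    eapply Rle_lt_trans; [|exact Hn].
    apply (tern_close (bits s) (bits t)); auto; apply bits_spec; auto.
Qed.

Lemma cantor_uncountable (X : Type) (d : X -> X -> R) (C S : X -> Prop) :
  cantor_set d C -> (forall x, C x -> S x) -> ~ countable S.
Proof.
  intros [h [H1 [H2 [H3 _]]]] HCS [g Hg].
  set (T n := epsilon (inhabits 0) (fun t => cantor_ternary t /\ h t = g n)).
  set (a n := negb (bits (T n) n)).
  destruct (tern_exists a) as [t Ht].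
  assert (Hct : cantor_ternary t) by (exists a; exact Ht).
  destruct (Hg (h t) (HCS _ (H1 t Hct))) as [n Hn].
  assert (HT : cantor_ternary (T n) /\ h (T n) = g n).
  { unfold T. apply epsilon_spec. exists t; auto. }
  destruct HT as [HT1 HT2].
  assert (T n = t) by (apply H3; auto; congruence).
  assert (bits (T n) = a) by (rewrite H; apply bits_of; auto).
  assert (a n = negb (a n)) by (unfold a at 1; rewrite H0; reflexivity).
  destruct (a n); discriminate.
Qed.

Section A14.
Variable X : Type.
Variable d : X -> X -> R.
Hypothesis Hm : is_metric d.
Variable f : X -> X.
Hypothesis Hf : continuous_map d f.
Hypothesis Hniso : no_isolated_points d.

Lemma ev_lt (u : nat -> R) : is_lim_seq u 0 -> forall e, 0 < e -> exists N, forall n, (N <= n)%nat -> u n < e.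
Proof.
  intros H e He. apply is_lim_seq_spec in H. destruct (H (mkposreal e He)) as [N HN].
  exists N. intros n Hn. specialize (HN n Hn). simpl in HN. apply Rabs_def2 in HN. lra.
Qed.

Lemma ev_gt (u : nat -> R) : is_lim_seq u p_infty -> forall M, exists N, forall n, (N <= n)%nat -> M < u n.
Proof.
  intros H M. apply is_lim_seq_spec in H. destruct (H M) as [N HN]. exists N. exact HN.
Qed.

Lemma finite_bound (F : nat -> R) Q : exists B, forall i, (i < Q)%nat -> F i <= B.
Proof.
  induction Q as [|Q [B HB]]; [exists 0; intros; lia|].
  exists (Rmax B (F Q)). intros i Hi. destruct (Nat.eq_dec i Q) as [->|Hn]; [apply Rmax_r|].
  eapply Rle_trans; [apply HB; lia|apply Rmax_l].
Qed.

Lemma times_infty x y (p q : nat -> nat) : x <> y ->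
  is_lim_seq (fun n => d (Nat.iter (p n) f x) (Nat.iter (p n) f y)) 0 ->
  is_lim_seq (fun n => d (Nat.iter (q n) f x) (Nat.iter (q n) f y)) p_infty ->
  (forall N, exists n0, forall n, (n0 <= n)%nat -> (N <= q n)%nat) /\
  (forall N, exists n0, forall n, (n0 <= n)%nat -> (N <= p n)%nat).
Proof.
  intros Hxy Hp Hq.
  assert (HQ : forall N, exists n0, forall n, (n0 <= n)%nat -> (N <= q n)%nat).
  { intros Q. destruct (finite_bound (fun i => d (Nat.iter i f x) (Nat.iter i f y)) Q) as [B HB].
    destruct (ev_gt _ Hq B) as [n0 Hn0]. exists n0. intros n Hn.
    destruct (Compare_dec.le_lt_dec Q (q n)) as [l|l]; auto. specialize (HB _ l). specialize (Hn0 n Hn). simpl in *. lra. }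
  split; auto.
  intros N.
  assert (Hne : forall P, Nat.iter P f x <> Nat.iter P f y).
  { intros P E. destruct (HQ P) as [n0 Hn0]. destruct (ev_gt _ Hq 0) as [n1 Hn1].
    specialize (Hn0 (max n0 n1) ltac:(lia)). specialize (Hn1 (max n0 n1) ltac:(lia)). simpl in Hn1.
    replace (q (max n0 n1)) with ((q (max n0 n1) - P) + P)%nat in Hn1 by lia.
    rewrite !(iter_add X f) in Hn1. rewrite E, (dxx X d Hm) in Hn1. lra. }
  destruct (finite_pos (fun i e => e <= d (Nat.iter i f x) (Nat.iter i f y)) ltac:(intros; lra) N)
    as [e [He HE]].
  { intros i _. exists (d (Nat.iter i f x) (Nat.iter i f y)). split; [apply (dneq X d Hm); auto| lra]. }
  destruct (ev_lt _ Hp e He) as [n0 Hn0]. exists n0. intros n Hn.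
  destruct (Compare_dec.le_lt_dec N (p n)) as [l|l]; auto. specialize (HE _ l). specialize (Hn0 n Hn). simpl in *. lra.
Qed.

Lemma avoid_ball (L : list X) : forall x r, 0 < r -> exists z rho, 0 < rho /\
  forall y, d z y < rho -> d x y < r /\ ~ In y L.
Proof.
  induction L as [|a L IH]; intros x r Hr.
  - exists x, r. split; [auto|]. intros y Hy; split; [auto| intros []].
  - destruct (IH x r Hr) as [z [rho [Hrho H]]].
    destruct (classic (z = a)) as [->|Hza].
    + destruct (Hniso a (rho/2) ltac:(lra)) as [z' [Hz' Hd]].
      pose proof (dneq X d Hm _ _ Hz').
      exists z', (Rmin (rho/2) (d z' a)). split; [apply Rmin_pos; lra|].
      intros y Hy. pose proof (Rmin_l (rho/2) (d z' a)). pose proof (Rmin_r (rho/2) (d z' a)).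
      pose proof (dtri X d Hm a z' y). rewrite (dsym X d Hm a z') in Hd.
      destruct (H y ltac:(rewrite (dsym X d Hm a z') in *; lra)) as [Hy1 Hy2].
      split; auto. intros [->|Hin]; [lra| tauto].
    + pose proof (dneq X d Hm _ _ Hza).
      exists z, (Rmin rho (d z a)). split; [apply Rmin_pos; lra|].
      intros y Hy. pose proof (Rmin_l rho (d z a)). pose proof (Rmin_r rho (d z a)).
      destruct (H y ltac:(lra)) as [Hy1 Hy2]. split; auto. intros [->|Hin]; [lra|tauto].
Qed.

Lemma pick_distinct (S : X -> Prop) : dense d S -> forall (g : nat -> X) eps, 0 < eps ->
  forall k, exists h, (forall i, (i < k)%nat -> S (h i) /\ d (g i) (h i) < eps) /\
     (forall i j, (i < k)%nat -> (j < k)%nat -> i <> j -> h i <> h j).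
Proof.
  intros HS g eps He k. induction k as [|k [h [H1 H2]]].
  - exists g. split; intros; lia.
  - destruct (avoid_ball (map h (seq 0 k)) (g k) eps He) as [z [rho [Hrho Hz]]].
    destruct (HS z rho Hrho) as [y [Sy Hy]]. destruct (Hz y Hy) as [Hy1 Hy2].
    exists (fun i => if Nat.eq_dec i k then y else h i). split.
    + intros i Hi. destruct (Nat.eq_dec i k) as [->|]; auto. apply H1; lia.
    + intros i j Hi Hj Hij. destruct (Nat.eq_dec i k), (Nat.eq_dec j k); subst; try lia.
      * intros E; apply Hy2. rewrite E. apply in_map, in_seq; lia.
      * intros E; apply Hy2. rewrite <- E. apply in_map, in_seq; lia.
      * apply H2; lia.
Qed.

Lemma A1_A4 (S : X -> Prop) : dense d S -> uniformly_LY_scrambled d f S ->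
  forall k, (2 <= k)%nat -> dense_k d k (Prox d f k) /\ dense_k d k (Dk d f k).
Proof.
  intros HS [_ [p [q Hpq]]] k Hk.
  assert (main : forall g eps, 0 < eps -> exists h, (forall i, (i < k)%nat -> d (g i) (h i) < eps) /\
            Prox d f k h /\ Dk d f k h).
  { intros g eps He. destruct (pick_distinct S HS g eps He k) as [h [H1 H2]].
    exists h. split; [intros; apply H1; auto|].
    assert (Hpair : forall i j, (i < j < k)%nat -> S (h i) /\ S (h j) /\ h i <> h j).
    { intros i j Hij. split; [apply H1; lia|split; [apply H1; lia| apply H2; lia]]. }
    destruct (Hpair 0%nat 1%nat ltac:(lia)) as [S0 [S1 N01]].
    destruct (Hpq _ _ S0 S1 N01) as [Hp0 Hq0].
    destruct (times_infty _ _ p q N01 Hp0 Hq0) as [Qi Pi].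
    split.
    - unfold Prox. apply is_LimInf_seq_unique. simpl. intros eps'. split.
      + intros N.
        assert (Hev : exists n0, forall j, (j < k)%nat -> forall i, (i < j)%nat -> forall n, (n0 <= n)%nat ->
                  d (Nat.iter (p n) f (h i)) (Nat.iter (p n) f (h j)) < eps').
        { apply (eventually_all (fun j n0 => forall i, (i < j)%nat -> forall n, (n0 <= n)%nat ->
                  d (Nat.iter (p n) f (h i)) (Nat.iter (p n) f (h j)) < eps')).
          { intros j n m Hnm H i Hi n' Hn'. apply H; auto; lia. }
          intros j Hj.
          destruct (eventually_all (fun i n0 => (i < j)%nat -> forall n, (n0 <= n)%nat ->
                  d (Nat.iter (p n) f (h i)) (Nat.iter (p n) f (h j)) < eps')) with (N := j) as [n0 Hn0].
          { intros i n m Hnm H Hi n' Hn'. apply H; auto; lia. }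
          { intros i Hi. destruct (Hpair i j ltac:(lia)) as [Si [Sj Nij]].
            destruct (Hpq _ _ Si Sj Nij) as [Hp _]. destruct (ev_lt _ Hp eps' (cond_pos eps')) as [n0 Hn0].
            exists n0. intros _ n Hn. apply Hn0; auto. }
          exists n0. intros i Hi n Hn. apply Hn0; auto. }
        destruct Hev as [n0 Hn0]. destruct (Pi N) as [n1 Hn1].
        exists (p (max n0 n1)). split; [apply Hn1; lia|].
        rewrite Rplus_0_l. apply (max_pair_lt X d); [apply cond_pos|].
        intros i j Hij. apply Hn0; lia.
      + exists O. intros n _. pose proof (max_pair_ge0 X d k (fun i => Nat.iter n f (h i))).
        pose proof (cond_pos eps'). lra.
    - unfold Dk. apply is_LimSup_seq_unique. simpl. intros M N.
      assert (Hev : exists n0, forall j, (j < k)%nat -> forall i, (i < j)%nat -> forall n, (n0 <= n)%nat ->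
                M < d (Nat.iter (q n) f (h i)) (Nat.iter (q n) f (h j))).
      { apply (eventually_all (fun j n0 => forall i, (i < j)%nat -> forall n, (n0 <= n)%nat ->
                M < d (Nat.iter (q n) f (h i)) (Nat.iter (q n) f (h j)))).
        { intros j n m Hnm H i Hi n' Hn'. apply H; auto; lia. }
        intros j Hj.
        destruct (eventually_all (fun i n0 => (i < j)%nat -> forall n, (n0 <= n)%nat ->
                M < d (Nat.iter (q n) f (h i)) (Nat.iter (q n) f (h j)))) with (N := j) as [n0 Hn0].
        { intros i n m Hnm H Hi n' Hn'. apply H; auto; lia. }
        { intros i Hi. destruct (Hpair i j ltac:(lia)) as [Si [Sj Nij]].
          destruct (Hpq _ _ Si Sj Nij) as [_ Hq]. destruct (ev_gt _ Hq M) as [n0 Hn0].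
          exists n0. intros _ n Hn. apply Hn0; auto. }
        exists n0. intros i Hi n Hn. apply Hn0; auto. }
      destruct Hev as [n0 Hn0]. destruct (Qi N) as [n1 Hn1].
      exists (q (max n0 n1)). split; [apply Hn1; lia|].
      apply (min_pair_gt X d); auto. intros i j Hij. apply Hn0; lia. }
  split; intros g eps He; destruct (main g eps He) as [h [H1 [H2 H3]]]; exists h; auto.
Qed.

End A14.

Section Core.
Variable X : Type.
Variable d : X -> X -> R.
Hypothesis Hm : is_metric d.
Variable f : X -> X.
Hypothesis Hf : continuous_map d f.
Hypothesis HA4 : forall k : nat, (2 <= k)%nat -> dense_k d k (Prox d f k) /\ dense_k d k (Dk d f k).

Lemma max_pair_ge' k g i j : (i < k)%nat -> (j < k)%nat -> i <> j -> d (g i) (g j) <= max_pair_dist X d k g.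
Proof.
  intros Hi Hj Hij. destruct (Nat.lt_gt_cases i j) as [[H|H] _]; auto.
  - apply max_pair_ge; auto; lia.
  - rewrite (dsym X d Hm). apply max_pair_ge; auto; lia.
Qed.

Lemma min_pair_le' k g i j : (i < k)%nat -> (j < k)%nat -> i <> j -> min_pair_dist X d k g <= d (g i) (g j).
Proof.
  intros Hi Hj Hij. destruct (Nat.lt_gt_cases i j) as [[H|H] _]; auto.
  - apply min_pair_le; auto; lia.
  - rewrite (dsym X d Hm). apply min_pair_le; auto; lia.
Qed.

Definition pair_good (p q m : nat) (x y : X) : Prop :=
  d (Nat.iter p f x) (Nat.iter p f y) < / (INR m + 1) /\ INR m < d (Nat.iter q f x) (Nat.iter q f y).

Lemma core N (g : nat -> X) eta (m : nat) : 0 < eta -> exists w eps p q,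
  0 < eps /\ eps <= eta /\ (forall i, (i < N)%nat -> d (g i) (w i) < eta) /\
  (forall i j, (i < N)%nat -> (j < N)%nat -> i <> j -> 3 * eps <= d (w i) (w j)) /\
  (forall i j, (i < N)%nat -> (j < N)%nat -> i <> j -> forall x y,
      d (w i) x <= eps -> d (w j) y <= eps -> pair_good p q m x y).
Proof.
  intros Heta. destruct (Compare_dec.le_lt_dec N 1) as [HN|HN].
  { exists g, eta, O, O. split; [auto|split; [lra|split; [|split]]].
    - intros i _. rewrite (dxx X d Hm). auto.
    - intros; lia.
    - intros; lia. }
  destruct (HA4 N ltac:(lia)) as [HP HD].
  pose proof (pos_INR m) as Hmpos.
  set (th := / (INR m + 1)).
  assert (Hth : 0 < th) by (unfold th; apply Rinv_0_lt_compat; lra).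
  destruct (HP g (eta/2) ltac:(lra)) as [h [Hprox Hh]].
  unfold Prox in Hprox.
  set (u := fun n => max_pair_dist X d N (fun i => Nat.iter n f (h i))) in Hprox.
  assert (Hu : is_LimInf_seq u (LimInf_seq u)) by (unfold LimInf_seq; apply proj2_sig).
  rewrite Hprox in Hu. simpl in Hu. destruct (Hu (mkposreal (th/2) ltac:(lra))) as [Hu1 _].
  destruct (Hu1 O) as [p [_ Hp]]. simpl in Hp. unfold u in Hp.
  destruct (finite_pos (fun i e => forall y, d (h i) y < e -> d (Nat.iter p f (h i)) (Nat.iter p f y) < th/4)
              ltac:(intros i e e' He' H y Hy; apply H; lra) N) as [del [Hdel Hdel']].
  { intros i _. apply (iter_cont X d f Hf p (h i) (th/4)). lra. }
  destruct (HD h (Rmin (eta/2) (del/2)) ltac:(apply Rmin_pos; lra)) as [w [Hdk Hw]].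
  unfold Dk in Hdk.
  set (v := fun n => min_pair_dist X d N (fun i => Nat.iter n f (w i))) in Hdk.
  assert (Hv : is_LimSup_seq v (LimSup_seq v)) by (unfold LimSup_seq; apply proj2_sig).
  rewrite Hdk in Hv. simpl in Hv. destruct (Hv (INR m + 1) O) as [q [_ Hq]]. unfold v in Hq.
  assert (Hwq : forall i j, (i < N)%nat -> (j < N)%nat -> i <> j ->
            INR m + 1 < d (Nat.iter q f (w i)) (Nat.iter q f (w j))).
  { intros i j Hi Hj Hij. eapply Rlt_le_trans; [exact Hq|].
    apply (min_pair_le' N (fun i => Nat.iter q f (w i))); auto. }
  assert (Hwd : forall i j, (i < N)%nat -> (j < N)%nat -> i <> j -> 0 < d (w i) (w j)).
  { intros i j Hi Hj Hij. apply (dneq X d Hm). intros E. specialize (Hwq i j Hi Hj Hij).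
    rewrite E, (dxx X d Hm) in Hwq. lra. }
  destruct (finite_pos (fun i e => e <= eta/2 /\ e <= del/2 /\
       (forall y, d (w i) y <= e -> d (Nat.iter q f (w i)) (Nat.iter q f y) < 1/2) /\
       (forall j, (j < N)%nat -> j <> i -> 3 * e <= d (w i) (w j))) ltac:(
       intros i e e' He' [H1 [H2 [H3 H4]]]; split; [lra|split; [lra|split]];
       [intros y Hy; apply H3; lra| intros j Hj Hji; specialize (H4 j Hj Hji); lra]) N)
    as [eps [Heps HE]].
  { intros i Hi. destruct (iter_cont X d f Hf q (w i) (1/2) ltac:(lra)) as [d1 [Hd1 H1]].
    destruct (finite_pos (fun j e => j <> i -> 3 * e <= d (w i) (w j)) ltac:(intros j e e' He' H Hj; specialize (H Hj); lra) N)
      as [e2 [He2 H2]].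
    { intros j Hj. destruct (Nat.eq_dec j i) as [->|Hji].
      - exists 1; split; [lra| tauto].
      - exists (d (w i) (w j) / 3). split; [pose proof (Hwd i j Hi Hj ltac:(auto)); lra| intros; lra]. }
    exists (Rmin (Rmin (eta/2) (del/2)) (Rmin (d1/2) e2)).
    pose proof (Rmin_l (eta/2) (del/2)). pose proof (Rmin_r (eta/2) (del/2)).
    pose proof (Rmin_l (d1/2) e2). pose proof (Rmin_r (d1/2) e2).
    pose proof (Rmin_l (Rmin (eta/2) (del/2)) (Rmin (d1/2) e2)).
    pose proof (Rmin_r (Rmin (eta/2) (del/2)) (Rmin (d1/2) e2)).
    split; [repeat apply Rmin_pos; lra|]. split; [lra|split; [lra|split]].
    - intros y Hy. apply H1. lra.
    - intros j Hj Hji. specialize (H2 j Hj Hji). lra. }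
  exists w, eps, p, q.
  assert (HE0 : exists i, (i < N)%nat) by (exists O; lia).
  destruct (HE 0%nat ltac:(lia)) as [E1 [E2 _]].
  split; [auto|split; [lra|split; [|split]]].
  - intros i Hi. specialize (Hh i Hi). specialize (Hw i Hi).
    pose proof (Rmin_l (eta/2) (del/2)). pose proof (dtri X d Hm (g i) (h i) (w i)). lra.
  - intros i j Hi Hj Hij. destruct (HE i Hi) as [_ [_ [_ H4]]]. apply H4; auto.
  - intros i j Hi Hj Hij x y Hx Hy. split.
    + assert (Hin : forall k z, (k < N)%nat -> d (w k) z <= eps -> d (Nat.iter p f (h k)) (Nat.iter p f z) < th/4).
      { intros k z Hk Hz. apply Hdel'; auto. specialize (Hw k Hk). pose proof (Rmin_r (eta/2) (del/2)).
        pose proof (dtri X d Hm (h k) (w k) z). lra. }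
      pose proof (Hin i x Hi Hx). pose proof (Hin j y Hj Hy).
      pose proof (max_pair_ge' N (fun i => Nat.iter p f (h i)) i j Hi Hj Hij) as Hmx. simpl in Hmx.
      pose proof (dtri X d Hm (Nat.iter p f x) (Nat.iter p f (h i)) (Nat.iter p f y)).
      pose proof (dtri X d Hm (Nat.iter p f (h i)) (Nat.iter p f (h j)) (Nat.iter p f y)).
      pose proof (dsym X d Hm (Nat.iter p f x) (Nat.iter p f (h i))). fold th. lra.
    + destruct (HE i Hi) as [_ [_ [Hc1 _]]]. destruct (HE j Hj) as [_ [_ [Hc2 _]]].
      pose proof (Hc1 x Hx). pose proof (Hc2 y Hy). pose proof (Hwq i j Hi Hj Hij).
      pose proof (dtri X d Hm (Nat.iter q f (w i)) (Nat.iter q f x) (Nat.iter q f (w j))).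
      pose proof (dtri X d Hm (Nat.iter q f x) (Nat.iter q f y) (Nat.iter q f (w j))).
      rewrite (dsym X d Hm (Nat.iter q f y) (Nat.iter q f (w j))) in H3. lra.
Qed.

End Core.

Definition Node := (nat * list bool)%type.
Lemma node_eq_dec (a b : Node) : {a = b} + {a <> b}.
Proof. repeat decide equality. Qed.

Fixpoint idx (L : list Node) (n : Node) : nat :=
  match L with nil => O | a :: L' => if node_eq_dec a n then O else S (idx L' n) end.

Lemma idx_spec L n : In n L -> (idx L n < length L)%nat /\ nth (idx L n) L (O, nil) = n.
Proof.
  induction L as [|a L IH]; simpl; [tauto|]. intros H.
  destruct (node_eq_dec a n) as [->|Hn]; [split; [lia|auto]|].
  destruct H as [->|H]; [tauto|]. destruct (IH H). split; [lia|auto].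
Qed.

Definition pre (a : nat -> bool) (n : nat) : list bool := map a (seq 0 n).

Lemma pre_S a n : pre a (S n) = pre a n ++ (a n :: nil).
Proof. unfold pre. rewrite seq_S, map_app. reflexivity. Qed.

Lemma pre_len a n : length (pre a n) = n.
Proof. unfold pre. rewrite length_map, length_seq. reflexivity. Qed.

Lemma pre_nth a n i : (i < n)%nat -> nth i (pre a n) false = a i.
Proof.
  intros H. rewrite (nth_indep _ false (a O)) by (rewrite pre_len; lia).
  unfold pre. rewrite map_nth, seq_nth by lia. reflexivity.
Qed.

Lemma pre_ext a b n : (forall i, (i < n)%nat -> a i = b i) -> pre a n = pre b n.
Proof. intros H. unfold pre. apply map_ext_in. intros i Hi. apply in_seq in Hi. apply H; lia. Qed.

Fixpoint bitlists (n : nat) : list (list bool) :=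
  match n with
  | O => nil :: nil
  | S n => flat_map (fun s => (s ++ false :: nil) :: (s ++ true :: nil) :: nil) (bitlists n)
  end.

Lemma in_bitlists s : In s (bitlists (length s)).
Proof.
  induction s as [|b s IH] using rev_ind; simpl; [auto|].
  rewrite length_app. simpl. rewrite Nat.add_1_r. simpl. apply in_flat_map. exists s. split; auto.
  destruct b; simpl; auto.
Qed.

Definition nodes (m : nat) : list Node :=
  flat_map (fun j => map (fun s => (j, s)) (bitlists (m - j))) (seq 0 (S m)).

Lemma in_nodes m j s : (j <= m)%nat -> length s = (m - j)%nat -> In (j, s) (nodes m).
Proof.
  intros Hj Hs. unfold nodes. apply in_flat_map. exists j. split; [apply in_seq; lia|].
  apply in_map. rewrite <- Hs. apply in_bitlists.
Qed.

Record stage (X : Type) := mkStage { sF : Node -> X; sE : R; sP : nat; sQ : nat }.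
Arguments sF {X}. Arguments sE {X}. Arguments sP {X}. Arguments sQ {X}.

Section Constr.
Variable X : Type.
Variable d : X -> X -> R.
Hypothesis Hm : is_metric d.
Hypothesis Hcomp : complete_metric d.
Variable f : X -> X.
Hypothesis Hf : continuous_map d f.
Hypothesis HA4 : forall k : nat, (2 <= k)%nat -> dense_k d k (Prox d f k) /\ dense_k d k (Dk d f k).
Variable x0 : X.
Variable e : nat -> X.

Definition cand (m : nat) (F : Node -> X) (n : Node) : X :=
  if Nat.eq_dec (fst n) m then e m else F (fst n, removelast (snd n)).

Definition stage_spec (m : nat) (Fp : Node -> X) (Ep : R) (s : stage X) : Prop :=
  0 < sE s /\ sE s <= Ep / 2 /\
  (forall n, In n (nodes m) -> d (cand m Fp n) (sF s n) < Ep / 2) /\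
  (forall n1 n2, In n1 (nodes m) -> In n2 (nodes m) -> n1 <> n2 -> 3 * sE s <= d (sF s n1) (sF s n2)) /\
  (forall n1 n2, In n1 (nodes m) -> In n2 (nodes m) -> n1 <> n2 -> forall x y,
     d (sF s n1) x <= sE s -> d (sF s n2) y <= sE s -> pair_good X d f (sP s) (sQ s) m x y).

Lemma core_nodes m Fp Ep : exists s, 0 < Ep -> stage_spec m Fp Ep s.
Proof.
  destruct (classic (0 < Ep)) as [HE|HE]; [|exists (mkStage X Fp 0 O O); tauto].
  set (L := nodes m).
  destruct (core X d Hm f Hf HA4 (length L) (fun i => cand m Fp (nth i L (O, nil))) (Ep/2) m ltac:(lra))
    as [w [eps [p [q [H1 [H2 [H3 [H4 H5]]]]]]]].
  exists (mkStage X (fun n => w (idx L n)) eps p q). intros _. simpl.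
  split; [auto|split; [auto|split; [|split]]].
  - intros n Hn. destruct (idx_spec L n Hn) as [Hi Hn']. specialize (H3 _ Hi). rewrite Hn' in H3. exact H3.
  - intros n1 n2 Hn1 Hn2 Hne. destruct (idx_spec L n1 Hn1) as [Hi1 E1]. destruct (idx_spec L n2 Hn2) as [Hi2 E2].
    apply H4; auto. intros E. apply Hne. rewrite <- E1, <- E2, E. reflexivity.
  - intros n1 n2 Hn1 Hn2 Hne. destruct (idx_spec L n1 Hn1) as [Hi1 E1]. destruct (idx_spec L n2 Hn2) as [Hi2 E2].
    apply H5; auto. intros E. apply Hne. rewrite <- E1, <- E2, E. reflexivity.
Qed.

Definition step (m : nat) (Fp : Node -> X) (Ep : R) : stage X :=
  proj1_sig (constructive_indefinite_description _ (core_nodes m Fp Ep)).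

Lemma step_spec m Fp Ep : 0 < Ep -> stage_spec m Fp Ep (step m Fp Ep).
Proof. unfold step. destruct (constructive_indefinite_description _ _) as [s Hs]. simpl. auto. Qed.

Fixpoint st (m : nat) : stage X :=
  match m with
  | O => step O (fun _ => x0) 1
  | S m' => step (S m') (sF (st m')) (sE (st m'))
  end.

Definition prevF (m : nat) : Node -> X := match m with O => fun _ => x0 | S m' => sF (st m') end.
Definition prevE (m : nat) : R := match m with O => 1 | S m' => sE (st m') end.

Lemma st_eq m : st m = step m (prevF m) (prevE m).
Proof. destruct m; reflexivity. Qed.

Definition E (m : nat) : R := sE (st m).

Lemma E_bound m : 0 < E m /\ E m <= (/2) ^ (S m).
Proof.
  induction m as [|m [IH1 IH2]].
  - unfold E. rewrite st_eq. destruct (step_spec O (prevF O) (prevE O)) as [H1 [H2 _]]; simpl in *; lra.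
  - unfold E in *. rewrite st_eq. destruct (step_spec (S m) (prevF (S m)) (prevE (S m))) as [H1 [H2 _]];
      simpl in *; auto. split; auto. simpl in IH2. lra.
Qed.

Lemma prevE_bound m : 0 < prevE m /\ prevE m <= (/2) ^ m.
Proof. destruct m; simpl; [lra|]. apply (E_bound m). Qed.

Lemma spec_at m : stage_spec m (prevF m) (prevE m) (st m).
Proof. rewrite st_eq. apply step_spec. apply prevE_bound. Qed.

Lemma E_half m : E (S m) <= E m / 2.
Proof. destruct (spec_at (S m)) as [_ [H _]]. exact H. Qed.


Definition u (j : nat) (a : nat -> bool) (k : nat) : X := sF (st (j + k)) (j, pre a k).

Lemma u_node j a k : In (j, pre a k) (nodes (j + k)).
Proof. apply in_nodes; [lia| rewrite pre_len; lia]. Qed.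

Lemma u_step j a k : d (u j a k) (u j a (S k)) < E (j + k) / 2.
Proof.
  unfold u. replace (j + S k)%nat with (S (j + k)) by lia.
  destruct (spec_at (S (j + k))) as [_ [_ [H _]]].
  specialize (H (j, pre a (S k))). replace (S (j + k)) with (j + S k)%nat in H at 1 by lia.
  specialize (H (u_node j a (S k))).
  assert (Hr : removelast (pre a (S k)) = pre a k) by (rewrite pre_S; apply removelast_last).
  unfold cand in H. cbn [fst snd] in H. destruct (Nat.eq_dec j (S (j + k))) as [|_]; [lia|].
  rewrite Hr in H. exact H.
Qed.

Lemma u_root j a : d (e j) (u j a O) < (/2) ^ S j.
Proof.
  unfold u. rewrite Nat.add_0_r. destruct (spec_at j) as [_ [_ [H _]]].
  specialize (H (j, nil) ltac:(apply in_nodes; simpl; lia)).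
  unfold cand in H. cbn [fst snd] in H. destruct (Nat.eq_dec j j) as [_|]; [|lia].
  destruct (prevE_bound j). change (pre a 0) with (@nil bool). simpl. lra.
Qed.

Lemma u_nested j a k k' : (k <= k')%nat -> forall y, d (u j a k') y <= E (j + k') -> d (u j a k) y <= E (j + k).
Proof.
  intros H; induction H as [|k' H IH]; intros y Hy; auto.
  apply IH. pose proof (u_step j a k'). pose proof (E_half (j + k')).
  replace (j + S k')%nat with (S (j + k')) in Hy by lia.
  pose proof (dtri X d Hm (u j a k') (u j a (S k')) y). lra.
Qed.

Lemma u_close j a k k' : (k <= k')%nat -> d (u j a k) (u j a k') <= E (j + k).
Proof.
  intros H. apply (u_nested j a k k' H). rewrite (dxx X d Hm). left; apply E_bound.
Qed.

Lemma u_cauchy j a : cauchy_seq X d (u j a).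
Proof.
  intros eps Heps. destruct (pow_small (/2) eps ltac:(lra) Heps) as [N HN].
  exists N. intros m n Hm' Hn.
  pose proof (u_close j a N m Hm'). pose proof (u_close j a N n Hn).
  pose proof (dtri X d Hm (u j a m) (u j a N) (u j a n)).
  pose proof (dsym X d Hm (u j a m) (u j a N)).
  destruct (E_bound (j + N)) as [_ HE].
  assert ((/2) ^ S (j + N) <= (/2) ^ S N) by (apply pow_decr; [lra|lia]).
  assert (Hs : (/2) ^ S N = /2 * (/2)^N) by reflexivity. lra.
Qed.

Definition phi (j : nat) (a : nat -> bool) : X :=
  epsilon (inhabits x0) (fun l => converges_to X d (u j a) l).

Lemma phi_spec j a : converges_to X d (u j a) (phi j a).
Proof.
  unfold phi. apply epsilon_spec. apply Hcomp. apply u_cauchy.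
Qed.

Lemma phi_ball j a k : d (u j a k) (phi j a) <= E (j + k).
Proof.
  apply Rnot_lt_le. intros Hl.
  destruct (phi_spec j a (d (u j a k) (phi j a) - E (j + k)) ltac:(lra)) as [N HN].
  specialize (HN (max N k) (Nat.le_max_l _ _)).
  pose proof (u_close j a k (max N k) (Nat.le_max_r _ _)).
  pose proof (dtri X d Hm (u j a k) (u j a (max N k)) (phi j a)). lra.
Qed.

Lemma phi_stage j a m : (j <= m)%nat -> d (sF (st m) (j, pre a (m - j))) (phi j a) <= E m.
Proof.
  intros H. pose proof (phi_ball j a (m - j)). unfold u in H0.
  replace (j + (m - j))%nat with m in H0 by lia. exact H0.
Qed.

Lemma stage_node j a m : (j <= m)%nat -> In (j, pre a (m - j)) (nodes m).
Proof. intros H. apply in_nodes; [lia| rewrite pre_len; lia]. Qed.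

Lemma phi_sep j j' a b m : (j <= m)%nat -> (j' <= m)%nat -> (j, pre a (m - j)) <> (j', pre b (m - j')) ->
  E m <= d (phi j a) (phi j' b).
Proof.
  intros H1 H2 Hne. destruct (spec_at m) as [_ [_ [_ [Hs _]]]].
  specialize (Hs _ _ (stage_node j a m H1) (stage_node j' b m H2) Hne).
  pose proof (phi_stage j a m H1). pose proof (phi_stage j' b m H2).
  pose proof (dtri X d Hm (sF (st m) (j, pre a (m - j))) (phi j a) (sF (st m) (j', pre b (m - j')))).
  pose proof (dtri X d Hm (phi j a) (phi j' b) (sF (st m) (j', pre b (m - j')))).
  pose proof (dsym X d Hm (phi j' b) (sF (st m) (j', pre b (m - j')))).
  pose proof (dsym X d Hm (sF (st m) (j, pre a (m - j))) (phi j a)). unfold E in *. lra.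
Qed.

Lemma phi_good j j' a b m : (j <= m)%nat -> (j' <= m)%nat -> (j, pre a (m - j)) <> (j', pre b (m - j')) ->
  pair_good X d f (sP (st m)) (sQ (st m)) m (phi j a) (phi j' b).
Proof.
  intros H1 H2 Hne. destruct (spec_at m) as [_ [_ [_ [_ Hs]]]].
  apply (Hs _ _ (stage_node j a m H1) (stage_node j' b m H2) Hne); apply phi_stage; auto.
Qed.

Lemma phi_cantor j : cantor_set d (fun x => exists a, x = phi j a).
Proof.
  apply (cantor_from_map X d Hm (phi j) (fun n => (/2) ^ n) (fun n => E (j + S n))).
  - intros eps He. apply pow_small; [lra|auto].
  - intros a b n H. pose proof (phi_ball j a n). pose proof (phi_ball j b n).
    assert (u j a n = u j b n) by (unfold u; rewrite (pre_ext a b n H); reflexivity).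
    rewrite H2 in H0. pose proof (dtri X d Hm (phi j a) (u j b n) (phi j b)).
    pose proof (dsym X d Hm (phi j a) (u j b n)).
    destruct (E_bound (j + n)) as [_ HE].
    assert ((/2) ^ S (j + n) <= (/2) ^ S n) by (apply pow_decr; [lra|lia]).
    assert (Hs : (/2) ^ S n = /2 * (/2)^n) by reflexivity. lra.
  - intros n. apply E_bound.
  - intros a b n H Hn. apply phi_sep; try lia.
    replace (j + S n - j)%nat with (S n) by lia. rewrite !pre_S, (pre_ext a b n H).
    intros E'. injection E' as E'. apply app_inj_tail in E'. destruct E' as [_ E']. congruence.
Qed.


Hypothesis He : forall x r, 0 < r -> forall J, exists j, (J <= j)%nat /\ d x (e j) < r.

Lemma diverge j j' a b : phi j a <> phi j' b -> exists M, forall m, (M <= m)%nat ->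
  (j <= m)%nat /\ (j' <= m)%nat /\ (j, pre a (m - j)) <> (j', pre b (m - j')).
Proof.
  intros Hne. destruct (Nat.eq_dec j j') as [<-|Hj].
  - assert (exists i, a i <> b i) as [i Hi].
    { apply NNPP; intros N. apply Hne. f_equal. apply functional_extensionality. intros i.
      apply NNPP; intros Q; apply N; eauto. }
    exists (j + S i)%nat. intros m Hm'. split; [lia|split; [lia|]].
    intros E'. injection E' as E'. apply (f_equal (fun l => nth i l false)) in E'.
    rewrite !pre_nth in E' by lia. auto.
  - exists (max j j'). intros m Hm'. split; [lia|split; [lia|]]. intros E'. injection E' as E'. auto.
Qed.

Lemma A3_constr : exists S, dense d S /\ sigma_cantor d S /\ uniformly_LY_scrambled d f S.
Proof.
  set (a0 := fun _ : nat => false).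
  exists (fun x => exists j a, x = phi j a). split; [|split].
  - intros x eps Heps. destruct (pow_small (/2) (eps/2) ltac:(lra) ltac:(lra)) as [K HK].
    destruct (He x (eps/2) ltac:(lra) K) as [j [Hj Hx]].
    exists (phi j a0). split; [eauto|].
    pose proof (u_root j a0). pose proof (phi_ball j a0 O). rewrite Nat.add_0_r in H0.
    destruct (E_bound j) as [_ HE].
    assert ((/2) ^ j <= (/2) ^ K) by (apply pow_decr; [lra|lia]).
    assert (Hs : (/2) ^ S j = /2 * (/2)^j) by reflexivity.
    pose proof (dtri X d Hm x (e j) (phi j a0)). pose proof (dtri X d Hm (e j) (u j a0 O) (phi j a0)). lra.
  - exists (fun n x => exists a, x = phi n a). split; [apply phi_cantor|].
    intros x. split; intros [j [a Hx]]; eauto.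
  - split.
    + exists (phi 0 a0), (phi 1 a0). split; [eauto|split; [eauto|]].
      intros E'. pose proof (phi_sep 0 1 a0 a0 1 ltac:(lia) ltac:(lia) ltac:(intros Q; injection Q; lia)).
      rewrite E', (dxx X d Hm) in H. pose proof (E_bound 1). lra.
    + exists (fun m => sP (st m)), (fun m => sQ (st m)).
      intros x y [j [a ->]] [j' [b ->]] Hne. destruct (diverge j j' a b Hne) as [M HM]. split.
      * apply is_lim_seq_spec. intros eps. destruct (archimed_cor1 eps (cond_pos eps)) as [N0 [HN0 HN0']].
        exists (max M N0). intros n Hn. destruct (HM n ltac:(lia)) as [H1 [H2 H3]].
        destruct (phi_good j j' a b n H1 H2 H3) as [Hp _].
        pose proof (dpos X d Hm (Nat.iter (sP (st n)) f (phi j a)) (Nat.iter (sP (st n)) f (phi j' b))).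
        rewrite Rminus_0_r, Rabs_right by lra.
        assert (INR N0 <= INR n) by (apply le_INR; lia).
        assert (0 < INR N0) by (apply lt_0_INR; lia).
        assert (/ (INR n + 1) <= / INR N0) by (apply Rinv_le_contravar; lra). lra.
      * apply is_lim_seq_spec. intros M'. destruct (INR_unbounded M') as [N1 HN1].
        exists (max M N1). intros n Hn. destruct (HM n ltac:(lia)) as [H1 [H2 H3]].
        destruct (phi_good j j' a b n H1 H2 H3) as [_ Hq].
        assert (INR N1 <= INR n) by (apply le_INR; lia). lra.
Qed.

End Constr.

Lemma A4_A3 (X : Type) (d : X -> X -> R) (f : X -> X) (Hne : inhabited X)
  (Hm : is_metric d) (Hcomp : complete_metric d) (Hsep : separable d)
  (Hniso : no_isolated_points d) (Hf : continuous_map d f) :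
  (forall k : nat, (2 <= k)%nat -> dense_k d k (Prox d f k) /\ dense_k d k (Dk d f k)) ->
  exists S, dense d S /\ sigma_cantor d S /\ uniformly_LY_scrambled d f S.
Proof.
  intros HA4. destruct Hne as [x0]. destruct Hsep as [D [[g0 Hg0] HD]].
  apply (A3_constr X d Hm Hcomp f Hf HA4 x0 g0).
  intros x r Hr J. apply NNPP. intros N.
  destruct (avoid_ball X d Hm Hniso (map g0 (seq 0 J)) x r Hr) as [z [rho [Hrho Hz]]].
  destruct (HD z rho Hrho) as [y [Dy Hy]]. destruct (Hg0 y Dy) as [n <-].
  destruct (Hz _ Hy) as [H1 H2].
  destruct (Compare_dec.le_lt_dec J n) as [l|l].
  - apply N. eauto.
  - apply H2. apply in_map, in_seq. lia.
Qed.

Theorem theorem2p3 (X : Type) (d : X -> X -> R) (f : X -> X)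
  (Hne : inhabited X)
  (Hmet : is_metric d) (Hcomp : complete_metric d) (Hsep : separable d)
  (Hniso : no_isolated_points d) (Hf : continuous_map d f) :
  let A1 := exists S, dense d S /\ uniformly_LY_scrambled d f S in
  let A2 := densely_uniformly_LY_chaotic d f in
  let A3 := exists S, dense d S /\ sigma_cantor d S /\ uniformly_LY_scrambled d f S in
  let A4 := forall k : nat, (2 <= k)%nat ->
              dense_k d k (Prox d f k) /\ dense_k d k (Dk d f k) in
  (A1 <-> A2) /\ (A2 <-> A3) /\ (A3 <-> A4).
Proof.
  intros A1 A2 A3 A4.
  assert (H12 : A1 -> A4).
  { intros [S [HS1 HS2]] k Hk. apply (A1_A4 X d Hmet f Hniso S HS1 HS2 k Hk). }
  assert (H43 : A4 -> A3) by (apply (A4_A3 X d f Hne Hmet Hcomp Hsep Hniso Hf)).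
  assert (H32 : A3 -> A2).
  { intros [S [HS1 [[C [HC HCS]] HS3]]]. exists S. split; [auto|split; [|auto]].
    destruct Hne as [x0]. destruct (HS1 x0 1 ltac:(lra)) as [y [Sy _]].
    destruct (proj1 (HCS y) Sy) as [n Hn].
    apply (cantor_uncountable X d (C n) S (HC n)). intros x Hx. apply HCS. eauto. }
  assert (H21 : A2 -> A1).
  { intros [S [HS1 [_ HS3]]]. exists S; auto. }
  split; [|split]; split; auto.
Qed.
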